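(* Let $S=(X,\prec,\sqsubset)$ be an so-structure and $\alpha,\beta\in X$. Then ($\alpha\lhd\beta$ or $\beta\lhd\alpha$ for every $\lhd\in ext(S)$) if and only if ($\alpha\prec\beta$ or $\beta\prec\alpha$).
   Context: A stratified order structure (so-structure) is a triple $S=(X,\prec,\sqsubset)$ with $\prec,\sqsubset\subseteq X\times X$ such that for all $\alpha,\beta,\gamma\in X$: (S1) $\neg(\alpha\sqsubset\alpha)$; (S2) $\alpha\prec\beta\Rightarrow\alpha\sqsubset\beta$; (S3) $\alpha\sqsubset\beta\sqsubset\gamma\wedge\alpha\neq\gamma\Rightarrow\alpha\sqsubset\gamma$; (S4) $(\alpha\sqsubset\beta\wedge\beta\prec\gamma)\vee(\alpha\prec\beta\wedge\beta\sqsubset\gamma)\Rightarrow\alpha\prec\gamma$. For a relation $\lhd$ on $X$: $\alpha\frown_\lhd\beta$ iff $\alpha\neq\beta$, $\neg(\alpha\lhd\beta)$ and $\neg(\beta\lhd\alpha)$; $\lhd^\frown:=\lhd\cup\frown_\lhd$. A partial order $\lhd$ is stratified if $\frown_\lhd\cup\mathrm{id}_X$ is an equivalence relation. A stratified extension of $S$ is a stratified order $\lhd$ on $X$ with $\prec\subseteq\lhd$ and $\sqsubset\subseteq\lhd^\frown$; $ext(S)$ is the set of all stratified extensions of $S$. *)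

(* Defs.v *)
Definition rel (X : Type) := X -> X -> Prop.

Definition so_structure {X : Type} (prec sqsub : rel X) : Prop :=
  (forall a, ~ sqsub a a) /\
  (forall a b, prec a b -> sqsub a b) /\
  (forall a b c, sqsub a b -> sqsub b c -> a <> c -> sqsub a c) /\
  (forall a b c, (sqsub a b /\ prec b c) \/ (prec a b /\ sqsub b c) -> prec a c).

Definition incomp {X : Type} (R : rel X) : rel X :=
  fun a b => a <> b /\ ~ R a b /\ ~ R b a.

Definition frown_ext {X : Type} (R : rel X) : rel X :=
  fun a b => R a b \/ incomp R a b.

Definition partial_order {X : Type} (R : rel X) : Prop :=
  (forall a, ~ R a a) /\ (forall a b c, R a b -> R b c -> R a c).

Definition equivalence {X : Type} (E : rel X) : Prop :=
  (forall a, E a a) /\ (forall a b, E a b -> E b a) /\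
  (forall a b c, E a b -> E b c -> E a c).

Definition stratified_order {X : Type} (R : rel X) : Prop :=
  partial_order R /\ equivalence (fun a b => incomp R a b \/ a = b).

Definition stratified_extension {X : Type} (prec sqsub R : rel X) : Prop :=
  stratified_order R /\
  (forall a b, prec a b -> R a b) /\
  (forall a b, sqsub a b -> frown_ext R a b).

(* Main.v *)
Require Import Defs.
From Stdlib Require Import Classical ClassicalEpsilon FunctionalExtensionality PropExtensionality.

Definition incl {U : Type} (A B : U -> Prop) := forall u, A u -> B u.
Definition chainS {U : Type} (C : (U -> Prop) -> Prop) :=
  forall A B, C A -> C B -> incl A B \/ incl B A.
Definition supS {U : Type} (e0 : U -> Prop) (C : (U -> Prop) -> Prop) : U -> Prop :=
  fun u => e0 u \/ exists E, C E /\ E u.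

Lemma set_ext {U : Type} (A B : U -> Prop) : incl A B -> incl B A -> A = B.
Proof.
  intros H1 H2. apply functional_extensionality; intro u.
  apply propositional_extensionality; split; auto.
Qed.

Inductive tower {U : Type} (e0 : U -> Prop) (g : (U -> Prop) -> (U -> Prop)) : (U -> Prop) -> Prop :=
| tw_g : forall E, tower e0 g E -> tower e0 g (g E)
| tw_sup : forall C, (forall E, C E -> tower e0 g E) -> chainS C -> tower e0 g (supS e0 C).

Lemma tower_e0 {U} e0 g (ginf : forall E : U -> Prop, incl E (g E)) x :
  tower e0 g x -> incl e0 x.
Proof.
  induction 1 as [E _ IH | C _ _ _].
  - intros u h; apply ginf, IH, h.
  - intros u h; left; exact h.
Qed.

Definition extreme {U} e0 g (c : U -> Prop) :=
  forall x, tower e0 g x -> incl x c -> ~ incl c x -> incl (g x) c.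

Lemma L1 {U} e0 g (ginf : forall E : U -> Prop, incl E (g E)) c :
  tower e0 g c -> extreme e0 g c -> forall x, tower e0 g x -> incl x c \/ incl (g c) x.
Proof.
  intros tc ec x tx. induction tx as [y ty IH | C HC IH hch].
  - destruct IH as [h | h].
    + destruct (classic (incl c y)) as [h2 | h2].
      * right. rewrite (set_ext y c h h2). intros u hu; exact hu.
      * left. apply ec; auto.
    + right. intros u hu; apply ginf, h, hu.
  - destruct (classic (exists E, C E /\ incl (g c) E)) as [[E [hE h]] | hn].
    + right. intros u hu. right. exists E; split; auto.
    + left. intros u [hu | [E [hE hu]]].
      * apply (tower_e0 e0 g ginf c tc); auto.
      * destruct (IH E hE) as [h | h]; auto.
        exfalso; apply hn; exists E; auto.
Qed.

Lemma L2 {U} e0 g (ginf : forall E : U -> Prop, incl E (g E)) c :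
  tower e0 g c -> extreme e0 g c.
Proof.
  intro tc. induction tc as [d td IH | C HC IH hch].
  - intros x tx hxc hncx.
    destruct (L1 e0 g ginf d td IH x tx) as [h | h].
    + destruct (classic (incl d x)) as [h2 | h2].
      * rewrite (set_ext x d h h2). intros u hu; exact hu.
      * intros u hu. apply ginf. exact (IH x tx h h2 u hu).
    + exfalso; apply hncx; exact h.
  - intros x tx hxc hncx.
    destruct (classic (exists E, C E /\ ~ incl E x)) as [[E [hE hnE]] | hn].
    + destruct (L1 e0 g ginf E (HC E hE) (IH E hE) x tx) as [h | h].
      * intros u hu. right. exists E. split; auto. exact (IH E hE x tx h hnE u hu).
      * exfalso; apply hnE. intros u hu; apply h, ginf, hu.
    + exfalso; apply hncx. intros u [hu | [E [hE hu]]].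
      * apply (tower_e0 e0 g ginf x tx); auto.
      * destruct (classic (incl E x)) as [h|h]; [apply h; auto|].
        exfalso; apply hn; exists E; auto.
Qed.

Lemma chain_tower {U} e0 g (ginf : forall E : U -> Prop, incl E (g E)) :
  chainS (tower e0 g).
Proof.
  intros x y tx ty. destruct (L1 e0 g ginf y ty (L2 e0 g ginf y ty) x tx) as [h | h]; auto.
  right. intros u hu; apply h, ginf, hu.
Qed.

Lemma zorn_sets (U : Type) (Adm : (U -> Prop) -> Prop) (e0 : U -> Prop) :
  Adm e0 ->
  (forall C : (U -> Prop) -> Prop, (forall E, C E -> Adm E /\ incl e0 E) -> chainS C -> Adm (supS e0 C)) ->
  exists m, Adm m /\ incl e0 m /\ forall F, Adm F -> incl m F -> incl F m.
Proof.
  intros A0 Asup.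
  set (Q := fun (E F : U -> Prop) => (Adm F /\ incl E F /\ ~ incl F E) \/
        (~ (exists F', Adm F' /\ incl E F' /\ ~ incl F' E) /\ F = E)).
  assert (Qex : forall E, exists F, Q E F).
  { intro E. destruct (classic (exists F', Adm F' /\ incl E F' /\ ~ incl F' E)) as [[F h]|h].
    - exists F; left; auto.
    - exists E; right; auto. }
  set (g := fun E => epsilon (inhabits E) (Q E)).
  assert (gQ : forall E, Q E (g E)) by (intro E; apply epsilon_spec, Qex).
  assert (ginf : forall E, incl E (g E)).
  { intro E. destruct (gQ E) as [[_ [h _]] | [_ h]]. exact h. rewrite h; intros u hu; exact hu. }
  assert (gadm : forall E, Adm E -> Adm (g E)).
  { intros E hE. destruct (gQ E) as [[h _] | [_ h]]. exact h. rewrite h; exact hE. }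
  assert (tadm : forall E, tower e0 g E -> Adm E).
  { induction 1 as [E _ IH | C HC IH hch]; auto.
    apply Asup; auto. intros E hE; split; auto. apply (tower_e0 e0 g ginf), HC, hE. }
  set (m := supS e0 (tower e0 g)).
  assert (tm : tower e0 g m) by (apply tw_sup; auto; apply chain_tower, ginf).
  exists m. split; [apply tadm, tm|]. split; [intros u hu; left; exact hu|].
  intros F hF hmF. apply NNPP; intro hn.
  assert (gm : incl (g m) m).
  { intros u hu. right. exists (g m). split; auto. apply tw_g, tm. }
  destruct (gQ m) as [[_ [_ h]] | [h _]].
  - apply h, gm.
  - apply h. exists F; auto.
Qed.

Record adm {X : Type} (p s : rel X) (a b : X) (E : bool * X * X -> Prop) : Prop := {
  a_refl : forall x, E (true, x, x);
  a_trans : forall x y z, E (true, x, y) -> E (true, y, z) -> E (true, x, z);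
  a_PT : forall x y, E (false, x, y) -> E (true, x, y);
  a_PTr : forall x y z, E (false, x, y) -> E (true, y, z) -> E (false, x, z);
  a_TPl : forall x y z, E (true, x, y) -> E (false, y, z) -> E (false, x, z);
  a_irr : forall x, ~ E (false, x, x);
  a_p : forall x y, p x y -> E (false, x, y);
  a_s : forall x y, s x y -> E (true, x, y);
  a_ab : E (true, a, b);
  a_ba : E (true, b, a) }.

Definition mkE {X : Type} (T P : rel X) : bool * X * X -> Prop :=
  fun u => match u with (true, x, y) => T x y | (false, x, y) => P x y end.

Lemma ext_step {X : Type} (p s : rel X) a b E c d :
  adm p s a b E -> ~ E (true, c, d) -> ~ E (false, d, c) ->
  exists E', adm p s a b E' /\ incl E E' /\ ~ incl E' E.
Proof.
  intros H hT hP.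
  set (T := fun x y => E (true, x, y)). set (P := fun x y => E (false, x, y)).
  set (T' := fun u v => T u v \/ (T u c /\ T d v)).
  set (P' := fun u v => exists w z, T' u w /\ P w z /\ T' z v).
  assert (T'tr : forall x y z, T' x y -> T' y z -> T' x z).
  { unfold T', T; intros x y z [h1|[h1 h2]] [h3|[h3 h4]].
    - left; eapply a_trans; eauto.
    - right; split; auto; eapply a_trans; eauto.
    - right; split; auto; eapply a_trans; eauto.
    - right; auto. }
  assert (T'rf : forall x, T' x x) by (intro; left; apply (a_refl _ _ _ _ _ H)).
  exists (mkE T' P'). split; [|split].
  - constructor; simpl.
    + exact T'rf.
    + exact T'tr.
    + intros x y [w [z [h1 [h2 h3]]]]. apply (T'tr _ _ _ h1). apply (T'tr w z y); [|exact h3].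
      left; apply (a_PT _ _ _ _ _ H); exact h2.
    + intros x y z [w [z' [h1 [h2 h3]]]] h4. exists w, z'. repeat split; auto. eapply T'tr; eauto.
    + intros x y z h0 [w [z' [h1 [h2 h3]]]]. exists w, z'. repeat split; auto. eapply T'tr; eauto.
    + intros x [w [z [h1 [h2 h3]]]]. unfold T', T, P in *.
      pose proof (a_TPl _ _ _ _ _ H) as TP. pose proof (a_PTr _ _ _ _ _ H) as PT.
      pose proof (a_trans _ _ _ _ _ H) as TT.
      destruct h1 as [h1|[h1 h1']]; destruct h3 as [h3|[h3 h3']].
      * apply (a_irr _ _ _ _ _ H w). exact (PT w x w (PT w z x h2 h3) h1).
      * apply hP. exact (TP d w c (TT d x w h3' h1) (PT w z c h2 h3)).
      * apply hP. exact (TP d w c h1' (PT w z c h2 (TT z x c h3 h1))).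
      * apply hP. exact (TP d w c h1' (PT w z c h2 h3)).
    + intros x y hp. exists x, y. repeat split; auto. apply (a_p _ _ _ _ _ H), hp.
    + intros x y hs. left. apply (a_s _ _ _ _ _ H), hs.
    + left. apply (a_ab _ _ _ _ _ H).
    + left. apply (a_ba _ _ _ _ _ H).
  - intros [[k x] y] hu. destruct k; simpl.
    + left; exact hu.
    + exists x, y. repeat split; auto.
  - intro hi. apply hT. apply (hi (true, c, d)). simpl. right. split; apply (a_refl _ _ _ _ _ H).
Qed.

Lemma sup_two {U : Type} (e0 : U -> Prop) C u v :
  (forall E, C E -> incl e0 E) -> chainS C ->
  supS e0 C u -> supS e0 C v -> exists F, (F = e0 \/ C F) /\ F u /\ F v.
Proof.
  intros He hch [hu|[E1 [h1 hu]]] [hv|[E2 [h2 hv]]].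
  - exists e0; auto.
  - exists E2; split; auto. split; auto. apply (He E2 h2 u hu).
  - exists E1; split; auto. split; auto. apply (He E1 h1 v hv).
  - destruct (hch E1 E2 h1 h2) as [h|h].
    + exists E2; split; auto.
    + exists E1; split; auto.
Qed.

Lemma sup_in {U : Type} (e0 : U -> Prop) C F u : (F = e0 \/ C F) -> F u -> supS e0 C u.
Proof. intros [->|h] hu; [left; auto| right; exists F; auto]. Qed.

Lemma sup_adm {X : Type} (p s : rel X) a b e0 C :
  adm p s a b e0 -> (forall E, C E -> adm p s a b E /\ incl e0 E) -> chainS C ->
  adm p s a b (supS e0 C).
Proof.
  intros H0 HC hch.
  assert (He : forall E, C E -> incl e0 E) by (intros E h; apply HC, h).
  assert (HF : forall F, F = e0 \/ C F -> adm p s a b F) by (intros F [->|h]; auto; apply HC, h).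
  constructor.
  - intro x; left; apply (a_refl _ _ _ _ _ H0).
  - intros x y z h1 h2. destruct (sup_two e0 C _ _ He hch h1 h2) as [F [hF [u1 u2]]].
    apply (sup_in e0 C F); auto. eapply a_trans; eauto.
  - intros x y h1. destruct h1 as [h|[E [hE h]]].
    + left. apply (a_PT _ _ _ _ _ H0), h.
    + right. exists E; split; auto. apply (a_PT _ _ _ _ _ (proj1 (HC E hE))), h.
  - intros x y z h1 h2. destruct (sup_two e0 C _ _ He hch h1 h2) as [F [hF [u1 u2]]].
    apply (sup_in e0 C F); auto. eapply a_PTr; eauto.
  - intros x y z h1 h2. destruct (sup_two e0 C _ _ He hch h1 h2) as [F [hF [u1 u2]]].
    apply (sup_in e0 C F); auto. eapply a_TPl; eauto.
  - intros x h1. destruct h1 as [h|[E [hE h]]].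
    + apply (a_irr _ _ _ _ _ H0 x h).
    + apply (a_irr _ _ _ _ _ (proj1 (HC E hE)) x h).
  - intros x y h; left; apply (a_p _ _ _ _ _ H0), h.
  - intros x y h; left; apply (a_s _ _ _ _ _ H0), h.
  - left; apply (a_ab _ _ _ _ _ H0).
  - left; apply (a_ba _ _ _ _ _ H0).
Qed.

Definition seq_ {X : Type} (s : rel X) : rel X := fun x y => x = y \/ s x y.

Lemma init_adm {X : Type} (p s : rel X) a b :
  so_structure p s -> ~ p a b -> ~ p b a ->
  adm p s a b (mkE (fun u v => seq_ s u v \/ (seq_ s u a /\ seq_ s b v) \/ (seq_ s u b /\ seq_ s a v))
     (fun u v => exists w z, (seq_ s u w \/ (seq_ s u a /\ seq_ s b w) \/ (seq_ s u b /\ seq_ s a w)) /\ p w z /\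
                  (seq_ s z v \/ (seq_ s z a /\ seq_ s b v) \/ (seq_ s z b /\ seq_ s a v)))).
Proof.
  intros [S1 [S2 [S3 S4]]] nab nba.
  assert (str : forall x y z, seq_ s x y -> seq_ s y z -> seq_ s x z).
  { unfold seq_; intros x y z [->|h1] [->|h2]; auto.
    destruct (classic (x = z)); auto. right; eapply S3; eauto. }
  assert (sp : forall x w z y, seq_ s x w -> p w z -> seq_ s z y -> p x y).
  { unfold seq_; intros x w z y h1 hp h2. destruct h1 as [e1|h1]; destruct h2 as [e2|h2]; subst.
    - exact hp.
    - eapply S4; right; split; eauto.
    - eapply S4; left; split; eauto.
    - eapply S4; right; split; [eapply S4; left; split; eauto | eauto]. }
  assert (pirr : forall x, ~ p x x) by (intros x h; apply (S1 x), S2, h).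
  set (T := fun u v => seq_ s u v \/ (seq_ s u a /\ seq_ s b v) \/ (seq_ s u b /\ seq_ s a v)).
  assert (Ttr : forall x y z, T x y -> T y z -> T x z).
  { unfold T; intros x y z [h1|[[h1 h1']|[h1 h1']]] [h2|[[h2 h2']|[h2 h2']]].
    - left; eauto.
    - right; left; eauto.
    - right; right; eauto.
    - right; left; eauto.
    - right; left; eauto.
    - left; eauto.
    - right; right; eauto.
    - left; eauto.
    - right; right; eauto. }
  assert (Trf : forall x, T x x) by (intro; left; left; reflexivity).
  assert (Ts : forall x y, s x y -> T x y) by (intros; left; right; auto).
  assert (Tp : forall x y, p x y -> T x y) by (intros; apply Ts, S2; auto).
  constructor; simpl; fold T.
  - exact Trf.
  - exact Ttr.
  - intros x y [w [z [h1 [h2 h3]]]]. exact (Ttr _ _ _ h1 (Ttr _ _ _ (Tp _ _ h2) h3)).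
  - intros x y z [w [z' [h1 [h2 h3]]]] h4. exists w, z'; split; [exact h1|split; [exact h2|exact (Ttr _ _ _ h3 h4)]].
  - intros x y z h0 [w [z' [h1 [h2 h3]]]]. exists w, z'; split; [exact (Ttr _ _ _ h0 h1)|split; [exact h2|exact h3]].
  - intros x [w [z [h1 [h2 h3]]]].
    destruct h1 as [h1|[[h1 h1']|[h1 h1']]]; destruct h3 as [h3|[[h3 h3']|[h3 h3']]].
    + exact (pirr w (sp w w z w (or_introl eq_refl) h2 (str z x w h3 h1))).
    + exact (nba (sp b w z a (str b x w h3' h1) h2 h3)).
    + exact (nab (sp a w z b (str a x w h3' h1) h2 h3)).
    + exact (nba (sp b w z a h1' h2 (str z x a h3 h1))).
    + exact (nba (sp b w z a h1' h2 h3)).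
    + exact (pirr b (sp b w z b h1' h2 h3)).
    + exact (nab (sp a w z b h1' h2 (str z x b h3 h1))).
    + exact (pirr a (sp a w z a h1' h2 h3)).
    + exact (nab (sp a w z b h1' h2 h3)).
  - intros x y h. exists x, y; split; [exact (Trf x)|split; [exact h|exact (Trf y)]].
  - exact Ts.
  - right; left; split; left; reflexivity.
  - right; right; split; left; reflexivity.
Qed.

Lemma exists_ext {X : Type} (p s : rel X) a b :
  so_structure p s -> ~ p a b -> ~ p b a ->
  exists R, stratified_extension p s R /\ ~ R a b /\ ~ R b a.
Proof.
  intros HS nab nba.
  destruct (zorn_sets _ (adm p s a b) _ (init_adm p s a b HS nab nba)
     (fun C HC hch => sup_adm p s a b _ C (init_adm p s a b HS nab nba) HC hch)) as [m [Hm [_ Hmax]]].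
  set (T := fun x y => m (true, x, y)).
  assert (tot : forall x y, T x y \/ T y x).
  { intros x y. apply NNPP; intro hn.
    assert (h1 : ~ T x y) by (intro; apply hn; auto).
    assert (h2 : ~ T y x) by (intro; apply hn; auto).
    destruct (classic (m (false, y, x))) as [hyx|hyx].
    - destruct (classic (m (false, x, y))) as [hxy|hxy].
      + apply (a_irr _ _ _ _ _ Hm x). eapply (a_PTr _ _ _ _ _ Hm); [exact hxy|].
        apply (a_PT _ _ _ _ _ Hm), hyx.
      + destruct (ext_step p s a b m y x Hm h2 hxy) as [E' [HE' [hi hni]]].
        apply hni, Hmax; auto.
    - destruct (ext_step p s a b m x y Hm h1 hyx) as [E' [HE' [hi hni]]].
      apply hni, Hmax; auto. }
  destruct HS as [S1 [S2 [S3 S4]]].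
  exists (fun x y => ~ T y x).
  assert (Trf : forall x, T x x) by (intro; apply (a_refl _ _ _ _ _ Hm)).
  assert (Ttr : forall x y z, T x y -> T y z -> T x z) by (intros; eapply (a_trans _ _ _ _ _ Hm); eauto).
  assert (incE : forall x y, incomp (fun x y => ~ T y x) x y <-> x <> y /\ T x y /\ T y x).
  { intros x y; unfold incomp; split.
    - intros [h1 [h2 h3]]. split; auto. split; apply NNPP; auto.
    - intros [h1 [h2 h3]]. split; auto. }
  split; [split; [split; [split|split]|split]|].
  + intros x h; apply h, Trf.
  + intros x y z h1 h2 h3. destruct (tot x y) as [h|h]; [apply h2; eauto | apply h1, h].
  + intros x; right; reflexivity.
  + split.
    * intros x y [h|h]; [left; destruct h as [n [h1 h2]]; split; [intro e; apply n; symmetry; exact e|split; auto] | right; auto].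
    * intros x y z [h1|h1] [h2|h2].
      -- apply incE in h1; apply incE in h2. destruct h1 as [n1 [t1 t1']], h2 as [n2 [t2 t2']].
         destruct (classic (x = z)) as [e|e]; [right; exact e|].
         left; apply incE. split; auto. split; eauto.
      -- subst; left; auto.
      -- subst; left; auto.
      -- subst; right; auto.
  + intros x y hp ht. apply (a_irr _ _ _ _ _ Hm x).
    eapply (a_PTr _ _ _ _ _ Hm); [apply (a_p _ _ _ _ _ Hm), hp | exact ht].
  + intros x y hs. unfold frown_ext.
    assert (txy : T x y) by (apply (a_s _ _ _ _ _ Hm), hs).
    destruct (classic (T y x)) as [h|h].
    * right. apply incE. split; [intro e; subst; apply (S1 y hs)|auto].
    * left; exact h.
  + split; intro h; apply h; [apply (a_ba _ _ _ _ _ Hm) | apply (a_ab _ _ _ _ _ Hm)].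
Qed.

Theorem mainTheorem3 (X : Type) (prec sqsub : rel X) (a b : X) :
  so_structure prec sqsub ->
  ((forall R : rel X, stratified_extension prec sqsub R -> R a b \/ R b a)
   <-> (prec a b \/ prec b a)).
Proof.
  intros HS. split.
  - intros H. apply NNPP; intro hn.
    destruct (exists_ext prec sqsub a b HS (fun h => hn (or_introl h)) (fun h => hn (or_intror h)))
      as [R [HR [n1 n2]]].
    destruct (H R HR); auto.
  - intros [h|h] R [_ [Hp _]]; [left|right]; apply Hp, h.
Qed.
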